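(* Let $\beta\ge1$. There exist $\epsilon_0>0$ and a function $g:(0,\epsilon_0)\to(0,\infty)$ with $\lim_{t\to0}g(t)=0$ such that the following holds. Let $\mathcal{Y}_1,\mathcal{Y}_2$ be Banach spaces, $0<\epsilon<\epsilon_0$, and let $L:\mathcal{Y}_1\to\mathcal{Y}_2$, $R:\mathcal{Y}_2\to\mathcal{Y}_1$ be operators such that $RL-I$ is compact, $\|RL-I\|\le\epsilon$ and $\|L\|,\|R\|\le\beta$. Then there exist a Banach space $\mathcal{Y}_3$ and an invertible operator $S:\mathcal{Y}_2\to\mathcal{Y}_1\oplus\mathcal{Y}_3$ with $\|S\|\|S^{-1}\|\le7\beta^6$ such that for all $T_1\in B(\mathcal{Y}_1)$ and $T_2\in B(\mathcal{Y}_2)$ with $LT_1-T_2L$ and $T_1R-RT_2$ compact, there are a compact operator $K$ on $\mathcal{Y}_2$ and an operator $T_3$ on $\mathcal{Y}_3$ with $S(T_2+K)S^{-1}=T_1\oplus T_3$, and moreover $\|K\|\le g(\epsilon)(\|T_2\|+1)$ whenever $\|LT_1-T_2L\|\le\epsilon$ and $\|T_1R-RT_2\|\le\epsilon$.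
   Context: Here $\mathcal{Y}_1\oplus\mathcal{Y}_3$ is the direct sum normed by $\|(y_1,y_3)\|=\|y_1\|+\|y_3\|$, and $(T_1\oplus T_3)(y_1,y_3)=(T_1y_1,T_3y_3)$. All operators are bounded linear. *)

(* Defs.v *)
From Stdlib Require Import Reals Lra Classical ClassicalDescription.
Open Scope R_scope.

Inductive scalar_kind := RealScalars | ComplexScalars.

Definition scal (k : scalar_kind) : Type :=
  match k with RealScalars => R | ComplexScalars => (R * R)%type end.

Definition sadd (k : scalar_kind) : scal k -> scal k -> scal k :=
  match k as k0 return scal k0 -> scal k0 -> scal k0 with
  | RealScalars => Rplus
  | ComplexScalars => fun a b => (fst a + fst b, snd a + snd b)
  end.

Definition smul (k : scalar_kind) : scal k -> scal k -> scal k :=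
  match k as k0 return scal k0 -> scal k0 -> scal k0 with
  | RealScalars => Rmult
  | ComplexScalars => fun a b =>
      (fst a * fst b - snd a * snd b, fst a * snd b + snd a * fst b)
  end.

Definition sone (k : scalar_kind) : scal k :=
  match k as k0 return scal k0 with
  | RealScalars => 1
  | ComplexScalars => (1, 0)
  end.

Definition sabs (k : scalar_kind) : scal k -> R :=
  match k as k0 return scal k0 -> R with
  | RealScalars => Rabs
  | ComplexScalars => fun a => sqrt (fst a * fst a + snd a * snd a)
  end.

Record NormedSpace (k : scalar_kind) : Type := {
  ns_car :> Type;
  vzero : ns_car;
  vadd : ns_car -> ns_car -> ns_car;
  vopp : ns_car -> ns_car;
  vscale : scal k -> ns_car -> ns_car;
  vnorm : ns_car -> R;
  vaddA : forall x y z, vadd x (vadd y z) = vadd (vadd x y) z;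
  vaddC : forall x y, vadd x y = vadd y x;
  vadd0 : forall x, vadd x vzero = x;
  vaddN : forall x, vadd x (vopp x) = vzero;
  vscaleA : forall a b x, vscale a (vscale b x) = vscale (smul k a b) x;
  vscale1 : forall x, vscale (sone k) x = x;
  vscaleDr : forall a x y, vscale a (vadd x y) = vadd (vscale a x) (vscale a y);
  vscaleDl : forall a b x, vscale (sadd k a b) x = vadd (vscale a x) (vscale b x);
  vnorm_ge0 : forall x, 0 <= vnorm x;
  vnorm_eq0 : forall x, vnorm x = 0 -> x = vzero;
  vnorm_scale : forall a x, vnorm (vscale a x) = sabs k a * vnorm x;
  vnorm_triangle : forall x y, vnorm (vadd x y) <= vnorm x + vnorm y
}.

Arguments ns_car {k} _.
Arguments vzero {k} _.
Arguments vadd {k X} _ _ : rename.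
Arguments vopp {k X} _ : rename.
Arguments vscale {k X} _ _ : rename.
Arguments vnorm {k X} _ : rename.

Definition vsub {k} {X : NormedSpace k} (x y : X) : X := vadd x (vopp y).

Definition cauchy_seq {k} {X : NormedSpace k} (u : nat -> X) : Prop :=
  forall e, 0 < e -> exists N : nat, forall m n : nat,
    (N <= m)%nat -> (N <= n)%nat -> vnorm (vsub (u m) (u n)) < e.

Definition converges_to {k} {X : NormedSpace k} (u : nat -> X) (l : X) : Prop :=
  forall e, 0 < e -> exists N : nat, forall n : nat,
    (N <= n)%nat -> vnorm (vsub (u n) l) < e.

Definition complete {k} (X : NormedSpace k) : Prop :=
  forall u : nat -> X, cauchy_seq u -> exists l, converges_to u l.

Definition is_linear {k} {X Y : NormedSpace k} (f : X -> Y) : Prop :=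
  (forall x y, f (vadd x y) = vadd (f x) (f y)) /\
  (forall a x, f (vscale a x) = vscale a (f x)).

Definition is_bounded {k} {X Y : NormedSpace k} (f : X -> Y) : Prop :=
  exists M, forall x, vnorm (f x) <= M * vnorm x.

Definition is_operator {k} {X Y : NormedSpace k} (f : X -> Y) : Prop :=
  is_linear f /\ is_bounded f.

(* { ||f x|| : ||x|| <= 1 } (with 0 adjoined; harmless since norms are >= 0
   and f 0 = 0 for linear f). *)
Definition opnorm_set {k} {X Y : NormedSpace k} (f : X -> Y) : R -> Prop :=
  fun r => r = 0 \/ exists x, vnorm x <= 1 /\ r = vnorm (f x).

Lemma opnorm_set_ne {k} {X Y : NormedSpace k} (f : X -> Y) :
  exists r, opnorm_set f r.
Proof. exists 0; left; reflexivity. Qed.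

(* Operator norm: sup_{||x|| <= 1} ||f x|| (0 if unbounded; only used on operators). *)
Definition opnorm {k} {X Y : NormedSpace k} (f : X -> Y) : R :=
  match excluded_middle_informative (bound (opnorm_set f)) with
  | left Hb => proj1_sig (completeness _ Hb (opnorm_set_ne f))
  | right _ => 0
  end.

Definition compact_op {k} {X Y : NormedSpace k} (f : X -> Y) : Prop :=
  forall x : nat -> X, (forall n, vnorm (x n) <= 1) ->
    exists phi : nat -> nat, (forall n, (phi n < phi (S n))%nat) /\
      exists l : Y, converges_to (fun n => f (x (phi n))) l.

Section DSum.
Context {k : scalar_kind} (X Y : NormedSpace k).

Definition ds_add (p q : X * Y) : X * Y := (vadd (fst p) (fst q), vadd (snd p) (snd q)).
Definition ds_opp (p : X * Y) : X * Y := (vopp (fst p), vopp (snd p)).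
Definition ds_scale (a : scal k) (p : X * Y) : X * Y := (vscale a (fst p), vscale a (snd p)).
Definition ds_norm (p : X * Y) : R := vnorm (fst p) + vnorm (snd p).

Lemma ds_addA x y z : ds_add x (ds_add y z) = ds_add (ds_add x y) z.
Proof. unfold ds_add; simpl; now rewrite !vaddA. Qed.
Lemma ds_addC x y : ds_add x y = ds_add y x.
Proof. unfold ds_add; now rewrite (vaddC _ _ (fst x)), (vaddC _ _ (snd x)). Qed.
Lemma ds_add0 x : ds_add x (vzero X, vzero Y) = x.
Proof. destruct x; unfold ds_add; simpl; now rewrite !vadd0. Qed.
Lemma ds_addN x : ds_add x (ds_opp x) = (vzero X, vzero Y).
Proof. unfold ds_add, ds_opp; simpl; now rewrite !vaddN. Qed.
Lemma ds_scaleA a b x : ds_scale a (ds_scale b x) = ds_scale (smul k a b) x.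
Proof. unfold ds_scale; simpl; now rewrite !vscaleA. Qed.
Lemma ds_scale1 x : ds_scale (sone k) x = x.
Proof. destruct x; unfold ds_scale; simpl; now rewrite !vscale1. Qed.
Lemma ds_scaleDr a x y : ds_scale a (ds_add x y) = ds_add (ds_scale a x) (ds_scale a y).
Proof. unfold ds_scale, ds_add; simpl; now rewrite !vscaleDr. Qed.
Lemma ds_scaleDl a b x : ds_scale (sadd k a b) x = ds_add (ds_scale a x) (ds_scale b x).
Proof. unfold ds_scale, ds_add; simpl; now rewrite !vscaleDl. Qed.
Lemma ds_norm_ge0 x : 0 <= ds_norm x.
Proof. unfold ds_norm; pose proof (vnorm_ge0 _ _ (fst x)); pose proof (vnorm_ge0 _ _ (snd x)); lra. Qed.
Lemma ds_norm_eq0 x : ds_norm x = 0 -> x = (vzero X, vzero Y).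
Proof.
  destruct x as [a b]; unfold ds_norm; simpl; intro H.
  pose proof (vnorm_ge0 _ _ a); pose proof (vnorm_ge0 _ _ b).
  rewrite (vnorm_eq0 _ _ a), (vnorm_eq0 _ _ b); auto; lra.
Qed.
Lemma ds_norm_scale a x : ds_norm (ds_scale a x) = sabs k a * ds_norm x.
Proof. unfold ds_norm, ds_scale; simpl; rewrite !vnorm_scale; ring. Qed.
Lemma ds_norm_triangle x y : ds_norm (ds_add x y) <= ds_norm x + ds_norm y.
Proof.
  unfold ds_norm, ds_add; simpl.
  pose proof (vnorm_triangle _ _ (fst x) (fst y));
  pose proof (vnorm_triangle _ _ (snd x) (snd y)); lra.
Qed.

Definition dsum : NormedSpace k :=
  Build_NormedSpace k (X * Y)%type (vzero X, vzero Y) ds_add ds_opp ds_scale ds_norm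
    ds_addA ds_addC ds_add0 ds_addN ds_scaleA ds_scale1 ds_scaleDr ds_scaleDl
    ds_norm_ge0 ds_norm_eq0 ds_norm_scale ds_norm_triangle.
End DSum.

Definition dsum_map {k} {X1 X3 : NormedSpace k} (T1 : X1 -> X1) (T3 : X3 -> X3)
  : dsum X1 X3 -> dsum X1 X3 :=
  fun z => (T1 (fst z), T3 (snd z)).

(* Main.v *)
Require Import Defs.
From Stdlib Require Import Reals Lra Lia Classical ClassicalDescription ProofIrrelevance IndefiniteDescription.
Open Scope R_scope.

Definition sreal (k : scalar_kind) (r : R) : scal k :=
  match k as k0 return scal k0 with
  | RealScalars => r
  | ComplexScalars => (r, 0)
  end.

Lemma sabs_real k r : sabs k (sreal k r) = Rabs r.
Proof.
  destruct k; simpl; auto.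
  replace (r * r + 0 * 0) with (Rsqr r) by (unfold Rsqr; ring).
  apply sqrt_Rsqr_abs.
Qed.

Lemma sadd_real k a b : sadd k (sreal k a) (sreal k b) = sreal k (a + b).
Proof. destruct k; simpl; auto. f_equal; ring. Qed.

Lemma smul_real k a b : smul k (sreal k a) (sreal k b) = sreal k (a * b).
Proof. destruct k; simpl; auto. f_equal; ring. Qed.

Lemma sone_real k : sone k = sreal k 1.
Proof. destruct k; reflexivity. Qed.

Arguments vaddC {k n} x y.
Arguments vaddA {k n} x y z.
Arguments vadd0 {k n} x.
Arguments vaddN {k n} x.
Arguments vscale1 {k n} x.

Lemma vadd0l {k} {X : NormedSpace k} (x : X) : vadd (vzero X) x = x.
Proof. rewrite vaddC; apply vadd0. Qed.

Lemma vaddNl {k} {X : NormedSpace k} (x : X) : vadd (vopp x) x = vzero X.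
Proof. rewrite vaddC; apply vaddN. Qed.

Lemma vadd_cancel_l {k} {X : NormedSpace k} (a b c : X) : vadd a b = vadd a c -> b = c.
Proof.
  intro H.
  rewrite <- (vadd0l b), <- (vaddNl a), <- vaddA, H, vaddA, vaddNl, vadd0l; reflexivity.
Qed.

Lemma vopp_unique {k} {X : NormedSpace k} (a b : X) : vadd a b = vzero X -> b = vopp a.
Proof. intro H; apply (vadd_cancel_l a); rewrite H, vaddN; reflexivity. Qed.

Lemma vsub_eq0 {k} {X : NormedSpace k} (a b : X) : vsub a b = vzero X -> a = b.
Proof.
  unfold vsub; intro H.
  rewrite <- (vadd0 a), <- (vaddNl b), vaddA, H, vadd0l; reflexivity.
Qed.

Lemma vsub_self {k} {X : NormedSpace k} (a : X) : vsub a a = vzero X.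
Proof. apply vaddN. Qed.

Lemma vscale_zero_s {k} {X : NormedSpace k} (x : X) : vscale (sreal k 0) x = vzero X.
Proof.
  apply (vadd_cancel_l (vscale (sreal k 0) x)).
  rewrite vadd0, <- vscaleDl, sadd_real, Rplus_0_r; reflexivity.
Qed.

Lemma vscale_0 {k} {X : NormedSpace k} a : vscale a (vzero X) = vzero X.
Proof.
  apply (vadd_cancel_l (vscale a (vzero X))).
  rewrite vadd0, <- vscaleDr, vadd0; reflexivity.
Qed.

Lemma vnorm0 {k} {X : NormedSpace k} : vnorm (vzero X) = 0.
Proof.
  rewrite <- (vscale_zero_s (vzero X)), vnorm_scale, sabs_real, Rabs_R0; ring.
Qed.

Lemma vopp_scale {k} {X : NormedSpace k} (x : X) : vopp x = vscale (sreal k (-1)) x.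
Proof.
  symmetry; apply vopp_unique.
  rewrite <- (vscale1 x) at 1; rewrite sone_real, <- vscaleDl, sadd_real.
  replace (1 + -1) with 0 by ring; apply vscale_zero_s.
Qed.

Lemma vnorm_opp {k} {X : NormedSpace k} (x : X) : vnorm (vopp x) = vnorm x.
Proof.
  rewrite vopp_scale, vnorm_scale, sabs_real.
  rewrite Rabs_left by lra; ring.
Qed.

Lemma vopp_vscale {k} {X : NormedSpace k} a (x : X) : vscale a (vopp x) = vopp (vscale a x).
Proof.
  apply vopp_unique. rewrite <- vscaleDr, vaddN; apply vscale_0.
Qed.

Lemma vadd_4 {k} {X : NormedSpace k} (a b c d : X) :
  vadd (vadd a b) (vadd c d) = vadd (vadd a c) (vadd b d).
Proof.
  rewrite <- !vaddA; f_equal; rewrite !vaddA; f_equal; apply vaddC.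
Qed.

Lemma vopp_add {k} {X : NormedSpace k} (a b : X) : vopp (vadd a b) = vadd (vopp a) (vopp b).
Proof.
  symmetry; apply vopp_unique. rewrite vadd_4, !vaddN; apply vadd0.
Qed.

Lemma vopp_opp {k} {X : NormedSpace k} (a : X) : vopp (vopp a) = a.
Proof. symmetry; apply vopp_unique; apply vaddNl. Qed.

Lemma vopp0 {k} {X : NormedSpace k} : vopp (vzero X) = vzero X.
Proof. symmetry; apply vopp_unique; apply vadd0. Qed.

Lemma vsub_add_add {k} {X : NormedSpace k} (a b c d : X) :
  vsub (vadd a b) (vadd c d) = vadd (vsub a c) (vsub b d).
Proof. unfold vsub; rewrite vopp_add; apply vadd_4. Qed.

Lemma vI1 {k} {X : NormedSpace k} (a b : X) : vadd a (vsub b a) = b.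
Proof. unfold vsub; rewrite (vaddC b), vaddA, vaddN; apply vadd0l. Qed.

Lemma vI2 {k} {X : NormedSpace k} (a b : X) : vsub (vadd a b) a = b.
Proof. unfold vsub; rewrite (vaddC a), <- vaddA, vaddN; apply vadd0. Qed.

Lemma vI4 {k} {X : NormedSpace k} (a b c : X) : vadd (vsub a b) (vsub b c) = vsub a c.
Proof. unfold vsub; rewrite <- vaddA, (vaddA (vopp b)), vaddNl, vadd0l; reflexivity. Qed.

Lemma vI5 {k} {X : NormedSpace k} (x a b : X) : vsub (vsub x a) (vsub x b) = vsub b a.
Proof.
  unfold vsub; rewrite vopp_add, vopp_opp, vadd_4, vaddN, vadd0l, vaddC; reflexivity.
Qed.

Lemma vI6 {k} {X : NormedSpace k} (c l : X) : vadd (vsub c l) l = c.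
Proof. unfold vsub; rewrite <- vaddA, vaddNl; apply vadd0. Qed.

Lemma vI3 {k} {X : NormedSpace k} (a b c d : X) :
  vadd (vadd a b) (vadd (vsub c a) (vopp d)) = vadd c (vsub b d).
Proof.
  rewrite vadd_4. rewrite vI1. reflexivity.
Qed.

Lemma vsub_0r {k} {X : NormedSpace k} (a : X) : vsub a (vzero X) = a.
Proof. unfold vsub; rewrite vopp0; apply vadd0. Qed.

Lemma vsub_0l {k} {X : NormedSpace k} (a : X) : vsub (vzero X) a = vopp a.
Proof. unfold vsub; apply vadd0l. Qed.

Lemma vsub_opp {k} {X : NormedSpace k} (a b : X) : vopp (vsub a b) = vsub b a.
Proof. unfold vsub; rewrite vopp_add, vopp_opp; apply vaddC. Qed.

Lemma vnorm_sub_sym {k} {X : NormedSpace k} (a b : X) : vnorm (vsub a b) = vnorm (vsub b a).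
Proof. rewrite <- vsub_opp, vnorm_opp; reflexivity. Qed.

Lemma vnorm_sub_tri {k} {X : NormedSpace k} (a b c : X) :
  vnorm (vsub a c) <= vnorm (vsub a b) + vnorm (vsub b c).
Proof. rewrite <- (vI4 a b c); apply vnorm_triangle. Qed.

Lemma vnorm_sub_le {k} {X : NormedSpace k} (a b : X) : vnorm (vsub a b) <= vnorm a + vnorm b.
Proof. unfold vsub; rewrite <- (vnorm_opp b); apply vnorm_triangle. Qed.

Lemma vnorm_rev {k} {X : NormedSpace k} (a b : X) : vnorm a <= vnorm (vsub a b) + vnorm b.
Proof. rewrite <- (vI6 a b) at 1; apply vnorm_triangle. Qed.

Lemma vscale_sub {k} {X : NormedSpace k} a (x y : X) :
  vscale a (vsub x y) = vsub (vscale a x) (vscale a y).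
Proof. unfold vsub; rewrite vscaleDr, vopp_vscale; reflexivity. Qed.

Lemma lin_zero {k} {X Y : NormedSpace k} (f : X -> Y) : is_linear f -> f (vzero X) = vzero Y.
Proof.
  intros [Ha _]. apply (vadd_cancel_l (f (vzero X))).
  rewrite <- Ha, !vadd0; reflexivity.
Qed.

Lemma lin_opp {k} {X Y : NormedSpace k} (f : X -> Y) x : is_linear f -> f (vopp x) = vopp (f x).
Proof.
  intros Hl. apply vopp_unique.
  rewrite <- (proj1 Hl), vaddN. apply lin_zero; auto.
Qed.

Lemma lin_sub {k} {X Y : NormedSpace k} (f : X -> Y) x y : is_linear f -> f (vsub x y) = vsub (f x) (f y).
Proof. intros Hl. unfold vsub. rewrite (proj1 Hl), lin_opp; auto. Qed.

Lemma lin_comp {k} {X Y Z : NormedSpace k} (f : X -> Y) (g : Y -> Z) :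
  is_linear f -> is_linear g -> is_linear (fun x => g (f x)).
Proof.
  intros [fa fs] [ga gs]; split; intros; [rewrite fa, ga | rewrite fs, gs]; reflexivity.
Qed.

Lemma lin_id {k} {X : NormedSpace k} : is_linear (fun x : X => x).
Proof. split; reflexivity. Qed.

Lemma lin_sub_f {k} {X Y : NormedSpace k} (f g : X -> Y) :
  is_linear f -> is_linear g -> is_linear (fun x => vsub (f x) (g x)).
Proof.
  intros [fa fs] [ga gs]; split; intros.
  - rewrite fa, ga; apply vsub_add_add.
  - rewrite fs, gs, vscale_sub; reflexivity.
Qed.

Lemma lin_add_f {k} {X Y : NormedSpace k} (f g : X -> Y) :
  is_linear f -> is_linear g -> is_linear (fun x => vadd (f x) (g x)).
Proof.
  intros [fa fs] [ga gs]; split; intros.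
  - rewrite fa, ga; apply vadd_4.
  - rewrite fs, gs, vscaleDr; reflexivity.
Qed.

Definition bnd {k} {X Y : NormedSpace k} (f : X -> Y) (M : R) :=
  0 <= M /\ forall x, vnorm (f x) <= M * vnorm x.

Lemma bounded_bnd {k} {X Y : NormedSpace k} (f : X -> Y) : is_bounded f -> exists M, bnd f M.
Proof.
  intros [M HM]; exists (Rabs M); split; [apply Rabs_pos|].
  intro x; eapply Rle_trans; [apply HM|].
  apply Rmult_le_compat_r; [apply vnorm_ge0 | apply RRle_abs].
Qed.

Lemma bnd_bounded {k} {X Y : NormedSpace k} (f : X -> Y) M : bnd f M -> is_bounded f.
Proof. intros [_ H]; exists M; auto. Qed.

Lemma bnd_comp {k} {X Y Z : NormedSpace k} (f : X -> Y) (g : Y -> Z) M N :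
  bnd f M -> bnd g N -> bnd (fun x => g (f x)) (N * M).
Proof.
  intros [HM Hf] [HN Hg]; split; [apply Rmult_le_pos; auto|].
  intro x; eapply Rle_trans; [apply Hg|]. rewrite Rmult_assoc.
  apply Rmult_le_compat_l; auto.
Qed.

Lemma bnd_sub {k} {X Y : NormedSpace k} (f g : X -> Y) M N :
  bnd f M -> bnd g N -> bnd (fun x => vsub (f x) (g x)) (M + N).
Proof.
  intros [HM Hf] [HN Hg]; split; [lra|].
  intro x; eapply Rle_trans; [apply vnorm_sub_le|].
  specialize (Hf x); specialize (Hg x); nra.
Qed.

Lemma bnd_add {k} {X Y : NormedSpace k} (f g : X -> Y) M N :
  bnd f M -> bnd g N -> bnd (fun x => vadd (f x) (g x)) (M + N).
Proof.
  intros [HM Hf] [HN Hg]; split; [lra|].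
  intro x; eapply Rle_trans; [apply vnorm_triangle|].
  specialize (Hf x); specialize (Hg x); nra.
Qed.

Lemma bnd_id {k} {X : NormedSpace k} : bnd (fun x : X => x) 1.
Proof. split; [lra| intro; lra]. Qed.

Lemma bnd_mono {k} {X Y : NormedSpace k} (f : X -> Y) M N : bnd f M -> M <= N -> bnd f N.
Proof.
  intros [HM Hf] HMN; split; [lra|]; intro x; eapply Rle_trans; [apply Hf|].
  apply Rmult_le_compat_r; auto; apply vnorm_ge0.
Qed.

Lemma opnorm_ge0 {k} {X Y : NormedSpace k} (f : X -> Y) : 0 <= opnorm f.
Proof.
  unfold opnorm; destruct (excluded_middle_informative _) as [Hb|Hb]; [|lra].
  destruct (completeness _ Hb (opnorm_set_ne f)) as [m Hm]; simpl; destruct Hm as [Hub _].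
  apply Hub; left; reflexivity.
Qed.

Lemma opnorm_le {k} {X Y : NormedSpace k} (f : X -> Y) M :
  bnd f M -> opnorm f <= M.
Proof.
  intros [HM Hf].
  unfold opnorm; destruct (excluded_middle_informative _) as [Hb|Hb]; [|lra].
  destruct (completeness _ Hb (opnorm_set_ne f)) as [m Hm]; simpl; destruct Hm as [_ Hlub].
  apply Hlub. intros r [->|[x [Hx ->]]]; [lra|].
  eapply Rle_trans; [apply Hf|]. pose proof (vnorm_ge0 _ _ x). nra.
Qed.

Lemma opnorm_spec {k} {X Y : NormedSpace k} (f : X -> Y) :
  is_operator f -> bnd f (opnorm f).
Proof.
  intros [Hl Hbd]. split; [apply opnorm_ge0|]. intro x.
  destruct (bounded_bnd f Hbd) as [M [HM Hf]].
  unfold opnorm; destruct (excluded_middle_informative _) as [Hb|Hb].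
  2:{ exfalso; apply Hb. exists M. intros r [->|[y [Hy ->]]]; [lra|].
      eapply Rle_trans; [apply Hf|]. pose proof (vnorm_ge0 _ _ y); nra. }
  destruct (completeness _ Hb (opnorm_set_ne f)) as [m Hm]; simpl; destruct Hm as [Hub _].
  pose proof (vnorm_ge0 _ _ x) as Hx0.
  destruct (Req_dec (vnorm x) 0) as [Hx|Hx].
  - rewrite (vnorm_eq0 _ _ x Hx), lin_zero, vnorm0; auto. rewrite vnorm0; lra.
  - set (n := vnorm x) in *.
    assert (Hn : 0 < n) by lra.
    assert (H1 : vnorm (f (vscale (sreal k (/ n)) x)) <= m).
    { apply Hub; right; exists (vscale (sreal k (/ n)) x); split; auto.
      rewrite vnorm_scale, sabs_real, Rabs_right; [fold n; field_simplify; lra|].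
      left; apply Rinv_0_lt_compat; auto. }
    rewrite (proj2 Hl), vnorm_scale, sabs_real, Rabs_right in H1
      by (left; apply Rinv_0_lt_compat; auto).
    apply (Rmult_le_compat_r n) in H1; [|lra].
    replace (/ n * vnorm (f x) * n) with (vnorm (f x)) in H1 by (field; lra).
    lra.
Qed.

Lemma op_bnd {k} {X Y : NormedSpace k} (f : X -> Y) M :
  is_operator f -> opnorm f <= M -> bnd f M.
Proof. intros Hf HM; eapply bnd_mono; [apply opnorm_spec; auto | auto]. Qed.

Lemma op_comp {k} {X Y Z : NormedSpace k} (f : X -> Y) (g : Y -> Z) :
  is_operator f -> is_operator g -> is_operator (fun x => g (f x)).
Proof.
  intros [fl fb] [gl gb]; split; [apply lin_comp; auto|].
  destruct (bounded_bnd _ fb) as [M HM]; destruct (bounded_bnd _ gb) as [N HN].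
  eapply bnd_bounded; apply bnd_comp; eauto.
Qed.

Lemma op_sub {k} {X Y : NormedSpace k} (f g : X -> Y) :
  is_operator f -> is_operator g -> is_operator (fun x => vsub (f x) (g x)).
Proof.
  intros [fl fb] [gl gb]; split; [apply lin_sub_f; auto|].
  destruct (bounded_bnd _ fb) as [M HM]; destruct (bounded_bnd _ gb) as [N HN].
  eapply bnd_bounded; apply bnd_sub; eauto.
Qed.

Lemma op_add {k} {X Y : NormedSpace k} (f g : X -> Y) :
  is_operator f -> is_operator g -> is_operator (fun x => vadd (f x) (g x)).
Proof.
  intros [fl fb] [gl gb]; split; [apply lin_add_f; auto|].
  destruct (bounded_bnd _ fb) as [M HM]; destruct (bounded_bnd _ gb) as [N HN].
  eapply bnd_bounded; apply bnd_add; eauto.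
Qed.

Lemma op_id {k} {X : NormedSpace k} : is_operator (fun x : X => x).
Proof. split; [apply lin_id| eapply bnd_bounded; apply bnd_id]. Qed.
Definition incr (phi : nat -> nat) := forall n, (phi n < phi (S n))%nat.

Lemma incr_ge phi : incr phi -> forall n, (n <= phi n)%nat.
Proof. intros H n; induction n; [lia| specialize (H n); lia]. Qed.

Lemma incr_mono phi : incr phi -> forall n m, (n < m)%nat -> (phi n < phi m)%nat.
Proof.
  intros H n m Hnm; induction m; [lia|].
  destruct (Nat.eq_dec n m) as [->|]; [apply H|].
  specialize (H m); assert (phi n < phi m)%nat by (apply IHm; lia); lia.
Qed.

Lemma incr_comp phi psi : incr phi -> incr psi -> incr (fun n => phi (psi n)).
Proof. intros H1 H2 n; apply incr_mono; auto. Qed.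

Lemma conv_sub {k} {X : NormedSpace k} (u : nat -> X) l psi :
  converges_to u l -> incr psi -> converges_to (fun n => u (psi n)) l.
Proof.
  intros Hc Hp e He; destruct (Hc e He) as [N HN]; exists N; intros n Hn.
  apply HN; pose proof (incr_ge psi Hp n); lia.
Qed.

Definition compactM {k} {X Y : NormedSpace k} (f : X -> Y) : Prop :=
  forall (M : R) (x : nat -> X), (forall n, vnorm (x n) <= M) ->
    exists phi, incr phi /\ exists l, converges_to (fun n => f (x (phi n))) l.

Lemma compactM_to {k} {X Y : NormedSpace k} (f : X -> Y) : compactM f -> compact_op f.
Proof. intros H x Hx; apply (H 1 x Hx). Qed.

Lemma compactM_ext {k} {X Y : NormedSpace k} (f g : X -> Y) :
  (forall x, f x = g x) -> compactM f -> compactM g.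
Proof.
  intros E H M x Hx; destruct (H M x Hx) as [phi [Hp [l Hl]]].
  exists phi; split; auto; exists l; intros e He; destruct (Hl e He) as [N HN];
  exists N; intros n Hn; rewrite <- E; auto.
Qed.

Lemma compactM_of {k} {X Y : NormedSpace k} (f : X -> Y) :
  is_linear f -> compact_op f -> compactM f.
Proof.
  intros Hl Hc M x Hx.
  set (c := Rabs M + 1).
  assert (Hc0 : 0 < c) by (unfold c; pose proof (Rabs_pos M); lra).
  assert (HMc : M < c) by (unfold c; pose proof (RRle_abs M); lra).
  destruct (Hc (fun n => vscale (sreal k (/ c)) (x n))) as [phi [Hp [l Hlim]]].
  { intro n; rewrite vnorm_scale, sabs_real, Rabs_right
      by (left; apply Rinv_0_lt_compat; auto).
    specialize (Hx n). apply (Rmult_le_reg_l c); auto.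
    rewrite <- Rmult_assoc, Rinv_r by lra. lra. }
  exists phi; split; auto; exists (vscale (sreal k c) l).
  intros e He.
  destruct (Hlim (e / c)) as [N HN]; [apply Rdiv_lt_0_compat; auto|].
  exists N; intros n Hn; specialize (HN n Hn); simpl in HN.
  rewrite (proj2 Hl) in HN.
  replace (f (x (phi n))) with (vscale (sreal k c) (vscale (sreal k (/ c)) (f (x (phi n))))).
  2:{ rewrite vscaleA, smul_real, Rinv_r, <- sone_real, vscale1 by lra; reflexivity. }
  rewrite <- vscale_sub, vnorm_scale, sabs_real, Rabs_right by lra.
  apply (Rmult_lt_compat_l c) in HN; auto.
  replace (c * (e / c)) with e in HN by (field; lra). auto.
Qed.

Lemma compactM_comp_r {k} {X Y Z : NormedSpace k} (g : X -> Y) (c : Y -> Z) G :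
  compactM c -> bnd g G -> compactM (fun x => c (g x)).
Proof.
  intros Hc [HG Hg] M x Hx.
  destruct (Hc (G * M) (fun n => g (x n))) as [phi [Hp [l Hl]]].
  { intro n; eapply Rle_trans; [apply Hg|]. apply Rmult_le_compat_l; auto. }
  exists phi; split; auto; exists l; auto.
Qed.

Lemma compactM_comp_l {k} {X Y Z : NormedSpace k} (c : X -> Y) (f : Y -> Z) :
  compactM c -> is_operator f -> compactM (fun x => f (c x)).
Proof.
  intros Hc Hf M x Hx.
  destruct (Hc M x Hx) as [phi [Hp [l Hl]]].
  exists phi; split; auto; exists (f l).
  destruct (opnorm_spec f Hf) as [Ha Hb].
  set (a := opnorm f) in *.
  intros e He.
  destruct (Hl (e / (a + 1))) as [N HN]; [apply Rdiv_lt_0_compat; lra|].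
  exists N; intros n Hn; specialize (HN n Hn); simpl in *.
  rewrite <- lin_sub by (apply Hf).
  eapply Rle_lt_trans; [apply Hb|].
  assert (a * (e / (a + 1)) < e).
  { apply (Rmult_lt_reg_r (a + 1)); [lra|].
    replace (a * (e / (a + 1)) * (a + 1)) with (a * e) by (field; lra). nra. }
  pose proof (vnorm_ge0 _ _ (vsub (c (x (phi n))) l)).
  eapply Rle_lt_trans; [|apply H]. apply Rmult_le_compat_l; lra.
Qed.

Lemma compactM_add {k} {X Y : NormedSpace k} (f g : X -> Y) :
  compactM f -> compactM g -> compactM (fun x => vadd (f x) (g x)).
Proof.
  intros Hf Hg M x Hx.
  destruct (Hf M x Hx) as [phi1 [Hp1 [l1 Hl1]]].
  destruct (Hg M (fun n => x (phi1 n))) as [phi2 [Hp2 [l2 Hl2]]]; [intro; apply Hx|].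
  exists (fun n => phi1 (phi2 n)); split; [apply incr_comp; auto|].
  exists (vadd l1 l2).
  pose proof (conv_sub _ _ _ Hl1 Hp2) as H1.
  intros e He.
  destruct (H1 (e/2)) as [N1 HN1]; [lra|]. destruct (Hl2 (e/2)) as [N2 HN2]; [lra|].
  exists (N1 + N2)%nat; intros n Hn.
  specialize (HN1 n ltac:(lia)); specialize (HN2 n ltac:(lia)); simpl in *.
  rewrite vsub_add_add. eapply Rle_lt_trans; [apply vnorm_triangle|]. lra.
Qed.
Lemma small_zero d : 0 <= d -> (forall eps, 0 < eps -> d < eps) -> d = 0.
Proof. intros H0 H. destruct (Req_dec d 0); auto. specialize (H d). lra. Qed.

Lemma A_inj {k} {X : NormedSpace k} (A : X -> X) e :
  is_linear A -> 0 <= e <= 1/2 -> (forall y, vnorm (vsub (A y) y) <= e * vnorm y) ->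
  forall u v, A u = A v -> u = v.
Proof.
  intros HA He HF u v Huv.
  assert (H0 : A (vsub u v) = vzero X) by (rewrite lin_sub, Huv, vsub_self; auto).
  specialize (HF (vsub u v)); rewrite H0, vsub_0l, vnorm_opp in HF.
  pose proof (vnorm_ge0 _ _ (vsub u v)).
  apply vsub_eq0, vnorm_eq0. nra.
Qed.

Fixpoint itseq {k} {X : NormedSpace k} (F : X -> X) (x : X) (n : nat) : X :=
  match n with
  | O => vzero X
  | S m => vsub x (F (itseq F x m))
  end.

Lemma A_surj {k} {X : NormedSpace k} (A : X -> X) e :
  complete X -> is_linear A -> 0 <= e <= 1/2 ->
  (forall y, vnorm (vsub (A y) y) <= e * vnorm y) ->
  forall x, exists l, A l = x.
Proof.
  intros Hc HA He HF x.
  set (F := fun y => vsub (A y) y).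
  assert (HFl : is_linear F) by (apply lin_sub_f; [auto|apply lin_id]).
  set (u := itseq F x).
  assert (Hd : forall n, vnorm (vsub (u (S n)) (u n)) <= e ^ n * vnorm x).
  { induction n.
    - simpl. unfold u; simpl. rewrite (lin_zero F), !vsub_0r; auto; lra.
    - unfold u in *; simpl itseq in *. rewrite vI5, <- lin_sub by auto.
      eapply Rle_trans; [apply HF|]. fold (itseq F x n). rewrite vnorm_sub_sym.
      simpl. pose proof (vnorm_ge0 _ _ (vsub (vsub x (F (itseq F x n))) (itseq F x n))).
      rewrite Rmult_assoc. apply Rmult_le_compat_l; [lra|]. exact IHn. }
  assert (Ht : forall n j, vnorm (vsub (u (n + j)%nat) (u n)) <= 2 * vnorm x * (e ^ n - e ^ (n + j))).
  { intros n j; induction j.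
    - rewrite Nat.add_0_r, vsub_self, vnorm0; lra.
    - rewrite Nat.add_succ_r. eapply Rle_trans; [apply (vnorm_sub_tri _ (u (n + j)%nat))|].
      specialize (Hd (n + j)%nat). simpl pow.
      pose proof (pow_le e (n + j) (proj1 He)). pose proof (vnorm_ge0 _ _ x).
      assert (e * e ^ (n + j) <= e ^ (n + j) / 2) by nra.
      assert (vnorm x * e ^ (n + j) * (1 - 2 * e) >= 0).
      { apply Rle_ge; apply Rmult_le_pos; [apply Rmult_le_pos|]; lra. }
      nra. }
  assert (Ht2 : forall n m, (n <= m)%nat -> vnorm (vsub (u m) (u n)) <= 2 * vnorm x * e ^ n).
  { intros n m Hnm. replace m with (n + (m - n))%nat by lia.
    eapply Rle_trans; [apply Ht|]. pose proof (pow_le e (n + (m - n)) (proj1 He)).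
    pose proof (vnorm_ge0 _ _ x). nra. }
  destruct (Hc u) as [l Hl].
  { intros eps Heps.
    destruct (pow_lt_1_zero e ltac:(rewrite Rabs_right; lra) (eps / (2 * vnorm x + 1)))
      as [N HN].
    { apply Rdiv_lt_0_compat; [auto|]. pose proof (vnorm_ge0 _ _ x); lra. }
    assert (Hb : forall n, (N <= n)%nat -> 2 * vnorm x * e ^ n < eps).
    { intros n Hn; specialize (HN n Hn). rewrite Rabs_right in HN by (apply Rle_ge, pow_le; lra).
      pose proof (vnorm_ge0 _ _ x).
      apply (Rmult_lt_compat_l (2 * vnorm x + 1)) in HN; [|lra].
      replace ((2 * vnorm x + 1) * (eps / (2 * vnorm x + 1))) with eps in HN by (field; lra).
      pose proof (pow_le e n (proj1 He)). nra. }
    exists N; intros m n Hm Hn.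
    destruct (Nat.le_ge_cases n m).
    - eapply Rle_lt_trans; [apply Ht2; auto|]. apply Hb; auto.
    - rewrite vnorm_sub_sym. eapply Rle_lt_trans; [apply Ht2; auto|]. apply Hb; auto. }
  assert (Hfix : l = vsub x (F l)).
  { apply vsub_eq0, vnorm_eq0, small_zero; [apply vnorm_ge0|].
    intros eps Heps. destruct (Hl (eps / 2)) as [N HN]; [lra|].
    eapply Rle_lt_trans; [apply (vnorm_sub_tri _ (u (S N)))|].
    assert (E : vsub (u (S N)) (vsub x (F l)) = F (vsub l (u N))).
    { unfold u; simpl. rewrite vI5, lin_sub; auto. }
    rewrite E. pose proof (HN (S N) ltac:(lia)). pose proof (HN N ltac:(lia)).
    pose proof (HF (vsub l (u N))). fold (F (vsub l (u N))) in H1.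
    rewrite vnorm_sub_sym in H0. rewrite vnorm_sub_sym in H.
    pose proof (vnorm_ge0 _ _ (vsub l (u N))). nra. }
  exists l. rewrite <- (vI6 (A l) l). fold (F l).
  rewrite Hfix at 2. rewrite vI1. reflexivity.
Qed.
Lemma exB {k} {X : NormedSpace k} (A : X -> X) e :
  complete X -> is_linear A -> 0 <= e <= 1/2 ->
  (forall y, vnorm (vsub (A y) y) <= e * vnorm y) ->
  exists B : X -> X, is_linear B /\ bnd B 2 /\ (forall x, A (B x) = x) /\ (forall y, B (A y) = y).
Proof.
  intros Hc HA He HF.
  pose proof (A_surj A e Hc HA He HF) as Hs.
  pose proof (A_inj A e HA He HF) as Hi.
  exists (fun x => proj1_sig (constructive_indefinite_description _ (Hs x))).
  set (B := fun x => proj1_sig (constructive_indefinite_description _ (Hs x))).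
  assert (HAB : forall x, A (B x) = x).
  { intro x; unfold B; destruct (constructive_indefinite_description _ (Hs x)); auto. }
  assert (HBA : forall y, B (A y) = y) by (intro y; apply Hi; rewrite HAB; auto).
  repeat split; auto.
  - intros x y; apply Hi; rewrite (proj1 HA), !HAB; auto.
  - intros a x; apply Hi; rewrite (proj2 HA), !HAB; auto.
  - lra.
  - intro x. pose proof (vnorm_rev (B x) (A (B x))). rewrite vnorm_sub_sym, HAB in H.
    specialize (HF (B x)). rewrite HAB in HF. pose proof (vnorm_ge0 _ _ (B x)). nra.
Qed.
Definition kerT {k} {X Y : NormedSpace k} (R : X -> Y) := {x : X | R x = vzero Y}.

Lemma sig_eq {k} {X Y : NormedSpace k} (R : X -> Y) (a b : kerT R) :
  proj1_sig a = proj1_sig b -> a = b.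
Proof. destruct a, b; simpl; intros ->; f_equal; apply proof_irrelevance. Qed.


Definition ker_zero {k} {X Y : NormedSpace k} (R : X -> Y) (Hl : is_linear R) : kerT R :=
  exist _ (vzero X) (lin_zero R Hl).

Lemma ker_add_pf {k} {X Y : NormedSpace k} (R : X -> Y) (Hl : is_linear R) (a b : kerT R) :
  R (vadd (proj1_sig a) (proj1_sig b)) = vzero Y.
Proof. destruct a, b; simpl; rewrite (proj1 Hl), e, e0; apply vadd0. Qed.

Definition ker_add {k} {X Y : NormedSpace k} (R : X -> Y) (Hl : is_linear R) (a b : kerT R) : kerT R :=
  exist _ _ (ker_add_pf R Hl a b).

Lemma ker_opp_pf {k} {X Y : NormedSpace k} (R : X -> Y) (Hl : is_linear R) (a : kerT R) :
  R (vopp (proj1_sig a)) = vzero Y.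
Proof. destruct a; simpl; rewrite lin_opp, e; auto; apply vopp0. Qed.

Definition ker_opp {k} {X Y : NormedSpace k} (R : X -> Y) (Hl : is_linear R) (a : kerT R) : kerT R :=
  exist _ _ (ker_opp_pf R Hl a).

Lemma ker_scale_pf {k} {X Y : NormedSpace k} (R : X -> Y) (Hl : is_linear R) c (a : kerT R) :
  R (vscale c (proj1_sig a)) = vzero Y.
Proof. destruct a; simpl; rewrite (proj2 Hl), e; apply vscale_0. Qed.

Definition ker_scale {k} {X Y : NormedSpace k} (R : X -> Y) (Hl : is_linear R) c (a : kerT R) : kerT R :=
  exist _ _ (ker_scale_pf R Hl c a).

Definition ker_norm {k} {X Y : NormedSpace k} (R : X -> Y) (a : kerT R) : Rdefinitions.R :=
  vnorm (proj1_sig a).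

Definition kerNS {k} {X Y : NormedSpace k} (R : X -> Y) (Hl : is_linear R) : NormedSpace k.
Proof.
  refine (Build_NormedSpace k (kerT R) (ker_zero R Hl) (ker_add R Hl) (ker_opp R Hl)
            (ker_scale R Hl) (ker_norm R) _ _ _ _ _ _ _ _ _ _ _ _);
  intros; try (apply sig_eq; simpl);
  unfold ker_norm in *; simpl in *.
  - apply vaddA.
  - apply vaddC.
  - apply vadd0.
  - apply vaddN.
  - apply vscaleA.
  - apply vscale1.
  - apply vscaleDr.
  - apply vscaleDl.
  - apply vnorm_ge0.
  - apply vnorm_eq0; auto.
  - apply vnorm_scale.
  - apply vnorm_triangle.
Defined.

Lemma kerNS_complete {k} {X Y : NormedSpace k} (R : X -> Y) (Hl : is_linear R) M :
  complete X -> bnd R M -> complete (kerNS R Hl).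
Proof.
  intros Hc [HM HR] u Hu.
  destruct (Hc (fun n => proj1_sig (u n))) as [l Hlim].
  { intros e He; destruct (Hu e He) as [N HN]; exists N; intros; apply HN; auto. }
  assert (Hl0 : R l = vzero Y).
  { apply vnorm_eq0, small_zero; [apply vnorm_ge0|]. intros e He.
    destruct (Hlim (e / (M + 1))) as [N HN]; [apply Rdiv_lt_0_compat; lra|].
    specialize (HN N (le_n _)).
    assert (R (vsub (proj1_sig (u N)) l) = vopp (R l)).
    { rewrite lin_sub, (proj2_sig (u N)), vsub_0l; auto. }
    specialize (HR (vsub (proj1_sig (u N)) l)). rewrite H, vnorm_opp in HR.
    pose proof (vnorm_ge0 _ _ (vsub (proj1_sig (u N)) l)).
    assert (M * (e / (M + 1)) < e).
    { apply (Rmult_lt_reg_r (M + 1)); [lra|].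
      replace (M * (e / (M + 1)) * (M + 1)) with (M * e) by (field; lra). nra. }
    eapply Rle_lt_trans; [apply HR|]. eapply Rle_lt_trans; [|apply H1].
    apply Rmult_le_compat_l; lra. }
  exists (exist _ l Hl0). intros e He; destruct (Hlim e He) as [N HN]; exists N; intros n Hn.
  apply HN; auto.
Qed.
Theorem lemma3p10 (k : scalar_kind) (beta : R) (Hbeta : 1 <= beta) :
  exists (eps0 : R) (g : R -> R),
    0 < eps0 /\
    (forall t, 0 < t < eps0 -> 0 < g t) /\
    (forall eta, 0 < eta -> exists delta, 0 < delta /\
        forall t, 0 < t < eps0 -> t < delta -> g t < eta) /\
    forall (Y1 Y2 : NormedSpace k), complete Y1 -> complete Y2 ->
    forall eps : R, 0 < eps < eps0 ->
    forall (L : Y1 -> Y2) (Rm : Y2 -> Y1),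
      is_operator L -> is_operator Rm ->
      compact_op (fun y : Y1 => vsub (Rm (L y)) y) ->
      opnorm (fun y : Y1 => vsub (Rm (L y)) y) <= eps ->
      opnorm L <= beta -> opnorm Rm <= beta ->
      exists (Y3 : NormedSpace k) (S : Y2 -> dsum Y1 Y3) (Sinv : dsum Y1 Y3 -> Y2),
        complete Y3 /\ is_operator S /\ is_operator Sinv /\
        (forall y, Sinv (S y) = y) /\ (forall z, S (Sinv z) = z) /\
        opnorm S * opnorm Sinv <= 7 * beta ^ 6 /\
        forall (T1 : Y1 -> Y1) (T2 : Y2 -> Y2),
          is_operator T1 -> is_operator T2 ->
          compact_op (fun y : Y1 => vsub (L (T1 y)) (T2 (L y))) ->
          compact_op (fun y : Y2 => vsub (T1 (Rm y)) (Rm (T2 y))) ->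
          exists (K : Y2 -> Y2) (T3 : Y3 -> Y3),
            is_operator K /\ compact_op K /\ is_operator T3 /\
            (forall z : dsum Y1 Y3, S (vadd (T2 (Sinv z)) (K (Sinv z))) = dsum_map T1 T3 z) /\
            (opnorm (fun y : Y1 => vsub (L (T1 y)) (T2 (L y))) <= eps ->
             opnorm (fun y : Y2 => vsub (T1 (Rm y)) (Rm (T2 y))) <= eps ->
             opnorm K <= g eps * (opnorm T2 + 1)).
Proof.
  set (c := 2 * beta + 2 * beta * (1 + 2 * beta * beta)).
  assert (Hc : 0 < c) by (unfold c; nra).
  exists (1/2), (fun t => c * t).
  split; [lra|]. split; [intros t Ht; nra|].
  split.
  { intros eta Heta; exists (eta / c); split; [apply Rdiv_lt_0_compat; auto|].
    intros t Ht Htd. apply (Rmult_lt_compat_l c) in Htd; auto.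
    replace (c * (eta / c)) with eta in Htd by (field; lra); auto. }
  intros Y1 Y2 Hc1 Hc2 eps Heps L Rm HL HR _ HFn HLn HRn.
  assert (HF : forall y, vnorm (vsub (Rm (L y)) y) <= eps * vnorm y).
  { apply op_bnd; auto. apply op_sub; [apply op_comp; auto| apply op_id]. }
  destruct (exB (fun y => Rm (L y)) eps Hc1 (lin_comp _ _ (proj1 HL) (proj1 HR))
              ltac:(lra) HF) as [B [HBl [HBb [HAB HBA]]]].
  assert (HBo : is_operator B) by (split; auto; eapply bnd_bounded; eauto).
  assert (bL : bnd L beta) by (apply op_bnd; auto).
  assert (bR : bnd Rm beta) by (apply op_bnd; auto).
  pose (Q := fun v => vsub v (L (B (Rm v)))).
  assert (HQo : is_operator Q).
  { apply op_sub; [apply op_id|]. apply op_comp; [apply op_comp; auto|auto]. }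
  assert (bBR : bnd (fun y => B (Rm y)) (2 * beta)) by (apply bnd_comp; auto).
  assert (bQ : bnd Q (1 + beta * (2 * beta))).
  { apply bnd_sub; [apply bnd_id|]. apply (bnd_comp (fun y => B (Rm y)) L); auto. }
  assert (RQ : forall v, Rm (Q v) = vzero Y1).
  { intro v; unfold Q. rewrite lin_sub by (apply HR). rewrite HAB; apply vsub_self. }
  assert (HBR : forall x z3, Rm z3 = vzero Y1 -> B (Rm (vadd (L x) z3)) = x).
  { intros x z3 Hz. rewrite (proj1 (proj1 HR)), Hz, vadd0; apply HBA. }
  assert (HQ : forall x z3, Rm z3 = vzero Y1 -> Q (vadd (L x) z3) = z3).
  { intros x z3 Hz. unfold Q. rewrite HBR by auto. apply vI2. }
  pose (Y3 := kerNS Rm (proj1 HR)).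
  exists Y3.
  exists (fun y => (B (Rm y), exist _ (Q y) (RQ y)) : dsum Y1 Y3).
  exists (fun z : dsum Y1 Y3 => vadd (L (fst z)) (proj1_sig (snd z))).
  assert (HSl : is_linear (fun y => (B (Rm y), exist _ (Q y) (RQ y)) : dsum Y1 Y3)).
  { split.
    - intros x y; simpl; unfold ds_add; simpl. f_equal.
      + rewrite (proj1 (proj1 HR)), (proj1 HBl); reflexivity.
      + apply sig_eq; simpl. apply (proj1 (proj1 HQo)).
    - intros a x; simpl; unfold ds_scale; simpl. f_equal.
      + rewrite (proj2 (proj1 HR)), (proj2 HBl); reflexivity.
      + apply sig_eq; simpl. apply (proj2 (proj1 HQo)). }
  assert (bS : bnd (fun y => (B (Rm y), exist _ (Q y) (RQ y)) : dsum Y1 Y3)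
                  (2 * beta + (1 + beta * (2 * beta)))).
  { split; [nra|]. intro y. simpl. unfold ds_norm; simpl; unfold ker_norm; simpl.
    destruct bBR as [_ h1]; destruct bQ as [_ h2]; specialize (h1 y); specialize (h2 y). lra. }
  assert (bSi : bnd (fun z : dsum Y1 Y3 => vadd (L (fst z)) (proj1_sig (snd z))) beta).
  { split; [lra|]. intros [x [z3 Hz]]. simpl. unfold ds_norm; simpl; unfold ker_norm; simpl.
    eapply Rle_trans; [apply vnorm_triangle|]. destruct bL as [_ h]; specialize (h x).
    pose proof (vnorm_ge0 _ _ z3). nra. }
  assert (HSil : is_linear (fun z : dsum Y1 Y3 => vadd (L (fst z)) (proj1_sig (snd z)))).
  { split.
    - intros [x1 [z1 h1]] [x2 [z2 h2]]; simpl; unfold ds_add; simpl.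
      rewrite (proj1 (proj1 HL)). apply vadd_4.
    - intros a [x1 [z1 h1]]; simpl; unfold ds_scale; simpl.
      rewrite (proj2 (proj1 HL)), vscaleDr; reflexivity. }
  split; [apply kerNS_complete with (M := beta); auto|].
  split; [split; auto; eapply bnd_bounded; eauto|].
  split; [split; auto; eapply bnd_bounded; eauto|].
  split; [intro y; simpl; apply vI1|].
  split.
  { intros [x [z3 Hz]]; simpl. f_equal; [apply HBR; auto|]. apply sig_eq; simpl. apply HQ; auto. }
  split.
  { pose proof (opnorm_le _ _ bS). pose proof (opnorm_le _ _ bSi).
    pose proof (opnorm_ge0 (fun y => (B (Rm y), exist _ (Q y) (RQ y)) : dsum Y1 Y3)).
    pose proof (opnorm_ge0 (fun z : dsum Y1 Y3 => vadd (L (fst z)) (proj1_sig (snd z)))).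
    eapply Rle_trans; [apply Rmult_le_compat; eauto|].
    assert (beta ^ 3 <= beta ^ 6).
    { replace (beta ^ 6) with (beta ^ 3 * beta ^ 3) by ring.
      assert (1 <= beta ^ 3) by (replace 1 with (1 ^ 3) by ring; apply pow_incr; lra).
      nra. }
    assert (beta <= beta ^ 3) by (simpl; nra).
    assert (beta * beta <= beta ^ 3) by (simpl; nra).
    assert (beta * beta * beta = beta ^ 3) by (simpl; ring).
    nra. }
  intros T1 T2 HT1 HT2 HC1 HC2.
  pose (C1 := fun y : Y1 => vsub (L (T1 y)) (T2 (L y))).
  pose (C2 := fun y : Y2 => vsub (T1 (Rm y)) (Rm (T2 y))).
  assert (HC1o : is_operator C1) by (apply op_sub; apply op_comp; auto).
  assert (HC2o : is_operator C2) by (apply op_sub; apply op_comp; auto).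
  pose (K := fun w => vadd (C1 (B (Rm w))) (L (B (C2 (Q w))))).
  assert (RQ2 : forall z : Y3, Rm (Q (T2 (proj1_sig z))) = vzero Y1) by (intro; apply RQ).
  exists K, (fun z : Y3 => (exist _ (Q (T2 (proj1_sig z))) (RQ2 z) : Y3)).
  split.
  { apply op_add.
    - apply (op_comp (fun w => B (Rm w)) C1); auto. apply op_comp; auto.
    - apply (op_comp (fun w => B (C2 (Q w))) L); auto.
      apply (op_comp (fun w => C2 (Q w)) B); auto. apply op_comp; auto. }
  split.
  { apply compactM_to. apply compactM_add.
    - apply (compactM_comp_r (fun w => B (Rm w)) C1 (2 * beta)); auto.
      apply compactM_of; [apply HC1o|apply HC1].
    - apply (compactM_comp_l (fun w => C2 (Q w)) (fun v => L (B v))); [|apply op_comp; auto].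
      apply (compactM_comp_r Q C2 (1 + beta * (2 * beta))); auto.
      apply compactM_of; [apply HC2o|apply HC2]. }
  split.
  { destruct (bounded_bnd _ (proj2 HT2)) as [M HM].
    split.
    - split.
      + intros [x hx] [y hy]; apply sig_eq; simpl.
        rewrite (proj1 (proj1 HT2)); apply (proj1 (proj1 HQo)).
      + intros a [x hx]; apply sig_eq; simpl.
        rewrite (proj2 (proj1 HT2)); apply (proj2 (proj1 HQo)).
    - exists ((1 + beta * (2 * beta)) * M). intros [x hx]. simpl; unfold ker_norm; simpl.
      pose proof (bnd_comp T2 Q _ _ HM bQ) as [_ h]. specialize (h x).
      eapply Rle_trans; [apply h|]. right; ring. }
  split.
  { intros [x [z3 Hz]]. simpl.
    assert (EK : vadd (T2 (vadd (L x) z3)) (K (vadd (L x) z3))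
                 = vadd (L (T1 x)) (Q (T2 z3))).
    { unfold K. rewrite HBR, HQ by auto. unfold C1, C2.
      rewrite Hz, (lin_zero T1 (proj1 HT1)), vsub_0l.
      rewrite (lin_opp B) by auto. rewrite (lin_opp L) by (apply HL).
      rewrite (proj1 (proj1 HT2)). rewrite vI3. reflexivity. }
    rewrite EK. unfold dsum_map; simpl. f_equal.
    - apply HBR; apply RQ.
    - apply sig_eq; simpl. apply HQ; apply RQ. }
  intros Hn1 Hn2.
  assert (bK : bnd K (eps * (2 * beta) + beta * (2 * (eps * (1 + beta * (2 * beta)))))).
  { apply bnd_add.
    - apply (bnd_comp (fun w => B (Rm w)) C1); auto. apply op_bnd; auto.
    - apply (bnd_comp (fun w => B (C2 (Q w))) L); auto.
      apply (bnd_comp (fun w => C2 (Q w)) B); auto.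
      apply (bnd_comp Q C2); auto. apply op_bnd; auto. }
  eapply Rle_trans; [apply (opnorm_le _ _ bK)|].
  pose proof (opnorm_ge0 T2).
  assert (eps * (2 * beta) + beta * (2 * (eps * (1 + beta * (2 * beta)))) = c * eps)
    by (unfold c; ring).
  rewrite H0. assert (0 <= c * eps) by nra. nra.
Qed.
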